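(* Let $G=\mathbb{Z}\wr F_2$ with $\mathbb{Z}=\langle a\rangle$, $F_2=F(x,y)$, and let $H=\langle x,y,[x,a]a,[y,a]a\rangle$. Let $G'=\langle a\rangle\wr(\langle s\rangle\wr\langle t\rangle)\cong\mathbb{Z}\wr(\mathbb{Z}\wr\mathbb{Z})$, set $x=ts$, $y=t$ in $G'$, and let $H'=\langle x,y,[x,a]a,[y,a]a\rangle\le G'$. Then $\mathrm{Dist}^G_H(n)\succeq 2^n$ and $\mathrm{Dist}^{G'}_{H'}(n)\succeq 2^n$.
   Context: Wreath products: for groups $L,K$, $L\wr K=W\rtimes K$ with $W=\bigoplus_{K}L$. Elements are pairs $(f,k)$ with $f:K\to L$ finitely supported, $k\in K$, multiplication $(f,k)(\hat f,\hat k)=(f+\hat f^{k},k\hat k)$ with $\hat f^{k}(v)=\hat f(vk^{-1})$. $K$ is identified with $\{(0,k)\}$ and $L$ with the $e$-indexed summand of $W$. All of $\langle a\rangle,\langle s\rangle,\langle t\rangle$ are infinite cyclic. Convention: $[x,a]=x^{-1}a^{-1}xa$. Distortion: if $G$ has finite generating set $S$ and a subgroup $H$ has finite generating set $T$, $\mathrm{Dist}^G_H(n)=\max\{|g|_T : g\in H,\ |g|_S\le n\}$, where $|g|_S$ is the word length on $S^{\pm1}$. $f\preceq g$ means there is $C>0$ with $f(n)\le Cg(Cn+C)+Cn+C$ for all $n$. $G$ is generated by $\{a,x,y\}$, $G'$ by $\{a,s,t\}$, and $H,H'$ by the listed four elements. *)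

(* Defs.v *)
From mathcomp Require Import all_boot all_order all_algebra.
From Stdlib Require Import ClassicalEpsilon.
Set Implicit Arguments. Unset Strict Implicit. Unset Printing Implicit Defensive.
Import GRing.Theory.
Local Open Scope ring_scope.

Record grp := Grp { car : Type; gmul : car -> car -> car; ginv : car -> car; gone : car }.

(* A word over a finite generating list S : letters (i, b) with i < size S,
   b = true meaning the inverse of the i-th generator. *)
Definition gen_letter (Gr : grp) (S : seq (car Gr)) (p : nat * bool) : car Gr :=
  let s := nth (gone Gr) S p.1 in if p.2 then ginv s else s.
Definition word_valid (Gr : grp) (S : seq (car Gr)) (w : seq (nat * bool)) : bool :=
  all (fun p => (p.1 < size S)%N) w.
Definition word_eval (Gr : grp) (S : seq (car Gr)) (w : seq (nat * bool)) : car Gr :=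
  foldr (fun p acc => gmul (gen_letter S p) acc) (gone Gr) w.

(* is_wordlen S g m : g lies in <S> and its word length |g|_S w.r.t. S^{+-1} is m *)
Definition is_wordlen (Gr : grp) (S : seq (car Gr)) (g : car Gr) (m : nat) : Prop :=
  (exists w, [/\ size w = m, word_valid S w & word_eval S w = g]) /\
  (forall w, word_valid S w -> word_eval S w = g -> (m <= size w)%N).

(* Dist_ge S T n M  <->  Dist^G_H(n) >= M, where H = <T>, G = <S>:
   some g in H with |g|_S <= n has |g|_T >= M. *)
Definition Dist_ge (Gr : grp) (S T : seq (car Gr)) (n M : nat) : Prop :=
  exists g l m, [/\ is_wordlen S g l, (l <= n)%N, is_wordlen T g m & (M <= m)%N].

(* (n |-> 2^n) \preceq Dist^G_H : exists C > 0, for all n,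
   2^n <= C * Dist(C n + C) + C n + C. *)
Definition exp_preceq_Dist (Gr : grp) (S T : seq (car Gr)) : Prop :=
  exists C : nat, (0 < C)%N /\ forall n : nat,
    exists M, Dist_ge S T (C * n + C) M /\ (2 ^ n <= C * M + C * n + C)%N.

Definition gcomm (Gr : grp) (x a : car Gr) : car Gr :=
  gmul (ginv x) (gmul (ginv a) (gmul x a)).

(* elements (f, k), f : K -> int (the restricted wreath product is the
   subgroup of finitely supported f), product
   (f,k)(f',k') = (f + f'^k, k k'), f'^k(v) = f'(v k^-1). *)
Definition wreath (K : grp) : grp :=
  @Grp ((car K -> int) * car K)
    (fun p q => (fun v => p.1 v + q.1 (gmul v (ginv p.2)), gmul p.2 q.2))
    (fun p => (fun v => - p.1 (gmul v p.2), ginv p.2))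
    (fun _ => 0, gone K).

Definition wreath_a (K : grp) (dec : forall u v : car K, {u = v} + {u <> v}) : car (wreath K) :=
  (fun v => if dec v (gone K) then 1 else 0, gone K).
Definition wreath_K (K : grp) (k : car K) : car (wreath K) := (fun _ => 0, k).

(* letter (g, e): g = false is x, g = true is y; e = true means inverse *)
Definition letter := (bool * bool)%type.
Definition linv (l : letter) : letter := (l.1, ~~ l.2).
Fixpoint reduced (w : seq letter) : bool :=
  match w with
  | l :: ((m :: _) as w') => (m != linv l) && reduced w'
  | _ => true
  end.
Definition red_cons (l : letter) (w : seq letter) : seq letter :=
  if w is m :: w' then (if m == linv l then w' else l :: w) else [:: l].
Definition freduce (w : seq letter) : seq letter := foldr red_cons [::] w.

Lemma red_cons_reduced l w : reduced w -> reduced (red_cons l w).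
Proof.
case: w => [|m w] //= Hw; case: ifP => Hm.
- by case: w Hw => //= ? ? /andP[].
- by rewrite /= Hm Hw.
Qed.

Lemma freduce_reduced w : reduced (freduce w).
Proof. by elim: w => [|l w IH] //=; apply: red_cons_reduced. Qed.

Definition F2T := {w : seq letter | reduced w}.
Definition F2mul (u v : F2T) : F2T :=
  exist _ (freduce (sval u ++ sval v)) (freduce_reduced _).
Definition F2inv (u : F2T) : F2T :=
  exist _ (freduce (rev (map linv (sval u)))) (freduce_reduced _).
Definition F2one : F2T := exist _ [::] (erefl true).
Definition F2 : grp := @Grp F2T F2mul F2inv F2one.
Definition F2x : F2T := exist _ [:: (false, false)] (erefl true).
Definition F2y : F2T := exist _ [:: (true, false)] (erefl true).

Definition G : grp := wreath F2.
Definition Ga : car G := @wreath_a F2 (fun u v : F2T => decP (u =P v)).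
Definition Gx : car G := @wreath_K F2 F2x.
Definition Gy : car G := @wreath_K F2 F2y.
Definition G_gens : seq (car G) := [:: Ga; Gx; Gy].
Definition H_gens : seq (car G) :=
  [:: Gx; Gy; gmul (gcomm Gx Ga) Ga; gmul (gcomm Gy Ga) Ga].

Definition ZwrZ : grp :=
  @Grp ((int -> int) * int)
    (fun p q => (fun v => p.1 v + q.1 (v - p.2), p.2 + q.2))
    (fun p => (fun v => - p.1 (v + p.2), - p.2))
    (fun _ => 0, 0).
Definition Ks : car ZwrZ := (fun v => if v == 0 then 1 else 0, 0).
Definition Kt : car ZwrZ := (fun _ => 0, 1).

Definition G' : grp := wreath ZwrZ.
Definition G'a : car G' := @wreath_a ZwrZ (fun u v : car ZwrZ => excluded_middle_informative (u = v)).
Definition G's : car G' := @wreath_K ZwrZ Ks.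
Definition G't : car G' := @wreath_K ZwrZ Kt.
Definition G'_gens : seq (car G') := [:: G'a; G's; G't].
Definition G'x : car G' := gmul G't G's.
Definition G'y : car G' := G't.
Definition H'_gens : seq (car G') :=
  [:: G'x; G'y; gmul (gcomm G'x G'a) G'a; gmul (gcomm G'y G'a) G'a].

(* Main.v *)
Require Import Defs.
From mathcomp Require Import all_boot all_order all_algebra.
From mathcomp Require Import zify ring lra.
From Stdlib Require Import ClassicalEpsilon Classical FunctionalExtensionality.
Set Implicit Arguments. Unset Strict Implicit. Unset Printing Implicit Defensive.
Import GRing.Theory Num.Theory Order.TTheory.
Local Open Scope ring_scope.


Definition grp_laws (K : grp) :=
  [/\ (forall a b c, @gmul K (@gmul K a b) c = @gmul K a (@gmul K b c)),
      (forall a, @gmul K (@gone K) a = a), (forall a, @gmul K a (@gone K) = a),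
      (forall a, @gmul K (@ginv K a) a = @gone K) &
      (forall a, @gmul K a (@ginv K a) = @gone K)].

Lemma linvK : involutive linv.
Proof. by case=> [? ?]; rewrite /linv /= negbK. Qed.

Lemma freduce_id w : reduced w -> freduce w = w.
Proof.
elim: w => [|l w IH] //= Hw.
have Hw' : reduced w by case: w Hw {IH} => //= m w /andP[].
rewrite IH //; case: w Hw {IH Hw'} => //= m w /andP[Hm _].
by rewrite (negbTE Hm).
Qed.

Lemma red_consK l X : reduced X -> red_cons l (red_cons (linv l) X) = X.
Proof.
case: X => [|m X] /=; first by rewrite eqxx.
case: ifP => [/eqP Hm|Hm] HX.
- rewrite linvK in Hm; subst m.
  case: X HX => [|m' X] //= /andP[Hm' _].
  by rewrite (negbTE Hm').
- by rewrite /= eqxx.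
Qed.

Lemma foldr_reduced r s : reduced r -> reduced (foldr red_cons r s).
Proof. by move=> Hr; elim: s => //= l s IH; apply: red_cons_reduced. Qed.

Lemma foldr_red_cons r l s : reduced s -> reduced r ->
  foldr red_cons r (red_cons l s) = red_cons l (foldr red_cons r s).
Proof.
case: s => [|m s] //= Hs Hr.
case: ifP => [/eqP Hm|Hm] //=.
subst m. by rewrite red_consK // foldr_reduced.
Qed.

Lemma foldr_freduce r a : reduced r ->
  foldr red_cons r (freduce a) = foldr red_cons r a.
Proof.
move=> Hr; elim: a => //= l a IH.
by rewrite foldr_red_cons ?IH // freduce_reduced.
Qed.

Lemma freduce_catl a b : freduce (freduce a ++ b) = freduce (a ++ b).
Proof.
by rewrite /freduce !foldr_cat -/(freduce b) foldr_freduce // freduce_reduced.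
Qed.

Lemma freduce_catr a b : freduce (a ++ freduce b) = freduce (a ++ b).
Proof.
by rewrite /freduce !foldr_cat -/(freduce b) -/(freduce (freduce b)) freduce_id // freduce_reduced.
Qed.

Lemma freduce_inv w : freduce (rev (map linv w) ++ w) = [::].
Proof.
elim: w => [|l w IH] //=.
rewrite rev_cons -cats1 -catA /= /freduce foldr_cat /=.
have := red_consK (linv l) (freduce_reduced w); rewrite linvK /freduce => ->.
by rewrite -foldr_cat.
Qed.

Lemma F2_laws : grp_laws F2.
Proof.
split.
- move=> [a Ha] [b Hb] [c Hc]; apply: val_inj => /=.
  by rewrite freduce_catl freduce_catr catA.
- by move=> [a Ha]; apply: val_inj => /=; rewrite freduce_id.
- by move=> [a Ha]; apply: val_inj => /=; rewrite cats0 freduce_id.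
- by move=> [a Ha]; apply: val_inj => /=; rewrite freduce_catl freduce_inv.
- move=> [a Ha]; apply: val_inj => /=; rewrite freduce_catr.
  have := freduce_inv (rev (map linv a)).
  by rewrite map_rev revK -map_comp (eq_map linvK) map_id.
Qed.

Lemma ZwrZ_laws : grp_laws ZwrZ.
Proof.
split.
- move=> [a m] [b n] [c p]; congr (_, _); rewrite /= ?addrA //.
  by apply: functional_extensionality => v; rewrite addrA opprD addrA.
- by move=> [a m]; congr (_, _); rewrite /= ?add0r //; apply: functional_extensionality => v; rewrite add0r subr0.
- by move=> [a m]; congr (_, _); rewrite /= ?addr0 //; apply: functional_extensionality => v; rewrite addr0.
- move=> [a m]; congr (_, _); rewrite /= ?addNr //; apply: functional_extensionality => v.
  by rewrite opprK addNr.
- move=> [a m]; congr (_, _); rewrite /= ?addrN //; apply: functional_extensionality => v.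
  by rewrite subrK addrN.
Qed.


Definition ind (P : Prop) : int := if excluded_middle_informative P then 1 else 0.
Lemma ind_iff (P Q : Prop) : (P <-> Q) -> ind P = ind Q.
Proof.
move=> H; rewrite /ind; case: excluded_middle_informative => p;
case: excluded_middle_informative => q //; exfalso; tauto.
Qed.
Lemma ind_T (P : Prop) : P -> ind P = 1.
Proof. by rewrite /ind; case: excluded_middle_informative. Qed.
Lemma ind_F (P : Prop) : ~ P -> ind P = 0.
Proof. by rewrite /ind; case: excluded_middle_informative. Qed.

Lemma eval_cons (Gr : grp) (S : seq (car Gr)) p w :
  word_eval S (p :: w) = gmul (gen_letter S p) (word_eval S w).
Proof. by []. Qed.
Lemma gen_letterE (Gr : grp) (S : seq (car Gr)) i b :
  gen_letter S (i, b) = if b then ginv (nth (gone Gr) S i) else nth (gone Gr) S i.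
Proof. by []. Qed.

Lemma wordlen_min (Gr : grp) (S : seq (car Gr)) g w :
  word_valid S w -> word_eval S w = g -> exists m, is_wordlen S g m /\ (m <= size w)%N.
Proof.
have : (size w <= size w)%N by [].
move: {2}(size w) => N.
elim: N w => [|N IH] w Hs Hv He.
  exists 0%N; split; last by [].
  split; last by [].
  by exists w; split => //; apply/eqP; rewrite -leqn0.
case: (classic (exists w', [/\ word_valid S w', word_eval S w' = g & (size w' < size w)%N])).
  move=> [w' [Hv' He' Hlt]].
  have [|m [Hm1 Hm2]] := IH w' _ Hv' He'.
    by rewrite -ltnS; apply: leq_trans Hlt Hs.
  by exists m; split => //; apply: leq_trans Hm2 (ltnW Hlt).
move=> Hno; exists (size w); split => //; split.
  by exists w.
move=> w'' Hv'' He''; rewrite leqNgt; apply/negP => Hlt; apply: Hno; by exists w''.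
Qed.

Section Gen.
Variable K : grp.
Hypothesis HK : grp_laws K.
Local Notation mK := (@gmul K).
Local Notation iK := (@ginv K).
Local Notation eK := (@gone K).

Lemma mulA a b c : mK (mK a b) c = mK a (mK b c). Proof. by case: HK. Qed.
Lemma mul1g a : mK eK a = a. Proof. by case: HK. Qed.
Lemma mulg1 a : mK a eK = a. Proof. by case: HK. Qed.
Lemma mulVg a : mK (iK a) a = eK. Proof. by case: HK. Qed.
Lemma mulgV a : mK a (iK a) = eK. Proof. by case: HK. Qed.
Lemma invK a : iK (iK a) = a.
Proof. by rewrite -[LHS]mulg1 -(mulVg a) -mulA mulVg mul1g. Qed.
Lemma inv1 : iK eK = eK.
Proof. by rewrite -[LHS]mulg1 mulVg. Qed.
Lemma mulgKV v z : mK (mK v z) (iK z) = v.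
Proof. by rewrite mulA mulgV mulg1. Qed.
Lemma mulgVK v z : mK (mK v (iK z)) z = v.
Proof. by rewrite mulA mulVg mulg1. Qed.
Lemma eq_mulV v z q : (mK v (iK z) = q) <-> (v = mK q z).
Proof. by split=> [<-|->]; rewrite ?mulgVK ?mulgKV. Qed.
Lemma eq_mul v z q : (mK v z = q) <-> (v = mK q (iK z)).
Proof. by split=> [<-|->]; rewrite ?mulgVK ?mulgKV. Qed.
Lemma invM a b : iK (mK a b) = mK (iK b) (iK a).
Proof.
have H : mK (mK a b) (mK (iK b) (iK a)) = eK.
  by rewrite mulA -(mulA b) mulgV mul1g mulgV.
by rewrite -[LHS]mulg1 -H -mulA mulVg mul1g.
Qed.

Local Notation W := (wreath K).
Local Notation wK := (@wreath_K K).
Variable a : car W.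
Hypothesis ha1 : forall v, a.1 v = ind (v = eK).
Hypothesis ha2 : a.2 = eK.

Definition uel_def z := @gmul W (@gcomm W (wK z) a) a.
Fact uel_key : unit. Proof. exact: tt. Qed.
Definition uel := locked_with uel_key uel_def.
Lemma uel_val z : uel z = (fun v => 2 * ind (v = eK) - ind (v = iK z), eK).
Proof.
rewrite /uel unlock /uel_def /gcomm /=; congr (_, _); last first.
  by rewrite ha2 inv1 !mulg1 mul1g mulVg.
apply: functional_extensionality => v.
rewrite !ha1 ha2 !inv1 !invK !mulg1 mulgKV mul1g mulVg inv1 mulg1.
rewrite (ind_iff (eq_mul v z eK)) mul1g.
ring.
Qed.

Variables X Y : car K.
Definition Tg : seq (car W) := [:: wK X; wK Y; uel X; uel Y].
Definition Zof (b : bool) := if b then X else Y.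
Definition sgn (b : bool) : int := if b then -1 else 1.
Definition fsT (L : seq (car K * bool * bool)) (v : car K) : int :=
  foldr (fun t acc => sgn t.1.2 * (2 * ind (v = t.1.1)
           - ind (v = mK (iK (Zof t.2)) t.1.1)) + acc) 0 L.
Definition shift z (t : car K * bool * bool) := ((mK t.1.1 z, t.1.2), t.2).

Lemma fsT_shift z L v : fsT (map (shift z) L) v = fsT L (mK v (iK z)).
Proof.
elim: L => //= [[[q sg] b]] L IH /=; rewrite IH; congr (_ * (_ - _) + _).
- by congr (_ * _); apply: ind_iff; rewrite eq_mulV.
- by apply: ind_iff; rewrite eq_mulV mulA.
Qed.

Lemma inv_word w : word_valid Tg w ->
  exists L, (size L <= size w)%N /\ forall v, (word_eval Tg w).1 v = fsT L v.
Proof.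
elim: w => [|[i b] w IH] /=; first by move=> _; exists [::].
case/andP=> Hi /IH [L [HL HLv]].
case: i Hi => [|[|[|[|i]]]] //= _; case: b => /=.
- exists (map (shift (iK X)) L); rewrite size_map; split=> [|v]; first by apply: leqW.
  by rewrite fsT_shift -HLv oppr0 add0r.
- exists (map (shift X) L); rewrite size_map; split=> [|v]; first by apply: leqW.
  by rewrite fsT_shift -HLv add0r.
- exists (map (shift (iK Y)) L); rewrite size_map; split=> [|v]; first by apply: leqW.
  by rewrite fsT_shift -HLv oppr0 add0r.
- exists (map (shift Y) L); rewrite size_map; split=> [|v]; first by apply: leqW.
  by rewrite fsT_shift -HLv add0r.
- exists (((eK, true), true) :: L); split=> [|v] //=.
  rewrite /gen_letter /= uel_val /= ?invK ?inv1 !mulg1 HLv; congr (_ + _).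
  by rewrite /sgn mulN1r.
- exists (((eK, false), true) :: L); split=> [|v] //=.
  rewrite /gen_letter /= uel_val /= ?invK ?inv1 !mulg1 HLv; congr (_ + _).
  by rewrite /sgn mul1r.
- exists (((eK, true), false) :: L); split=> [|v] //=.
  rewrite /gen_letter /= uel_val /= ?invK ?inv1 !mulg1 HLv; congr (_ + _).
  by rewrite /sgn mulN1r.
- exists (((eK, false), false) :: L); split=> [|v] //=.
  rewrite /gen_letter /= uel_val /= ?invK ?inv1 !mulg1 HLv; congr (_ + _).
  by rewrite /sgn mul1r.
Qed.

Definition fsP (P : seq (car K * int)) v : int :=
  foldr (fun p acc => p.2 * ind (v = p.1) + acc) 0 P.
Variable c : car K -> rat.
Definition wsP (P : seq (car K * int)) : rat :=
  foldr (fun p acc => p.2%:~R * c p.1 + acc) 0 P.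
Definition sumA (P : seq (car K * int)) : int := foldr (fun p acc => p.2 + acc) 0 P.
Definition prq q := fun p : car K * int =>
  if excluded_middle_informative (p.1 = q) then true else false.

Lemma fsP_cat P Q v : fsP (P ++ Q) v = fsP P v + fsP Q v.
Proof. by elim: P => [|p P IH] /=; rewrite ?add0r // IH addrA. Qed.
Lemma wsP_cat P Q : wsP (P ++ Q) = wsP P + wsP Q.
Proof. by elim: P => [|p P IH] /=; rewrite ?add0r // IH addrA. Qed.

Lemma fsP_filter (pr : pred (car K * int)) P v :
  fsP P v = fsP (filter pr P) v + fsP (filter (predC pr) P) v.
Proof.
elim: P => [|p P IH] /=; first by rewrite addr0.
by case: (pr p) => /=; rewrite IH; ring.
Qed.
Lemma wsP_filter (pr : pred (car K * int)) P :
  wsP P = wsP (filter pr P) + wsP (filter (predC pr) P).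
Proof.
elim: P => [|p P IH] /=; first by rewrite addr0.
by case: (pr p) => /=; rewrite IH; ring.
Qed.

Lemma fsP_prq q P v : fsP (filter (prq q) P) v = sumA (filter (prq q) P) * ind (v = q).
Proof.
elim: P => [|p P IH] /=; first by rewrite mul0r.
rewrite /prq; case: excluded_middle_informative => [Hp|Hp] //=.
by rewrite -/(prq q) IH Hp mulrDl.
Qed.
Lemma wsP_prq q P : wsP (filter (prq q) P) = (sumA (filter (prq q) P))%:~R * c q.
Proof.
elim: P => [|p P IH] /=; first by rewrite mul0r.
rewrite /prq; case: excluded_middle_informative => [Hp|Hp] //=.
by rewrite -/(prq q) IH Hp intrD mulrDl.
Qed.
Lemma fsP_nprq q P : fsP (filter (predC (prq q)) P) q = 0.
Proof.
elim: P => [|p P IH] //=.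
rewrite /prq; case: excluded_middle_informative => [|Hp] //=.
by rewrite IH ind_F ?mulr0 ?addr0 // => H; apply: Hp.
Qed.

Lemma lin_alg n P : (size P <= n)%N -> (forall v, fsP P v = 0) -> wsP P = 0.
Proof.
elim: n P => [|n IH] [|[q a0] P] //= HP H.
have Hq := H q.
rewrite /= (fsP_filter (prq q)) fsP_prq fsP_nprq ind_T // in Hq.
have Hs : a0 + sumA (filter (prq q) P) = 0.
  by rewrite -Hq !mulr1 addr0.
rewrite (wsP_filter (prq q)) wsP_prq (IH (filter (predC (prq q)) P)).
- by rewrite addr0 -mulrDl -intrD Hs mul0r.
- by rewrite size_filter; apply: leq_trans (count_size _ _) HP.
move=> v; have := H v; rewrite /= (fsP_filter (prq q)) fsP_prq.
by rewrite addrA -mulrDl Hs mul0r add0r.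
Qed.

Definition toP (L : seq (car K * bool * bool)) : seq (car K * int) :=
  foldr (fun t acc => (t.1.1, sgn t.1.2 * 2) ::
          (mK (iK (Zof t.2)) t.1.1, - sgn t.1.2) :: acc) [::] L.
Lemma fsP_toP L v : fsP (toP L) v = fsT L v.
Proof. by elim: L => [|t L IH] //=; rewrite IH; ring. Qed.

Hypothesis hc : forall b q, `|2 * c q - c (mK (iK (Zof b)) q)| <= 2.
Lemma wsP_toP L : `|wsP (toP L)| <= 2 * (size L)%:R.
Proof.
elim: L => [|[[q sg] b] L IH]; first by rewrite /= normr0 mulr0.
have -> : wsP (toP ((q, sg, b) :: L)) =
   (sgn sg)%:~R * (2 * c q - c (mK (iK (Zof b)) q)) + wsP (toP L).
  by case: sg => /=; rewrite ?intrD ?intrN ?mulr1z; ring.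
apply: le_trans (ler_normD _ _) _.
have -> : 2 * (size ((q, sg, b) :: L))%:R = 2 * (size L)%:R + 2 :> rat.
  by rewrite [size _]/= -[(size L).+1]addn1 natrD mulrDr mulr1.
rewrite addrC; apply: lerD => //.
rewrite normrM; case: sg => /=; rewrite ?normrN normr1 mul1r; exact: hc.
Qed.

Lemma lower_bound w A B : word_valid Tg w ->
  (forall v, (word_eval Tg w).1 v = ind (v = A) - ind (v = B)) ->
  `|c A - c B| <= 2 * (size w)%:R.
Proof.
move=> /inv_word [L [HL HLv]] Hg.
have H0 := @lin_alg _ (toP L ++ [:: (A, -1); (B, 1)]) (leqnn _).
rewrite wsP_cat /= in H0.
have E : wsP (toP L) = c A - c B.
  have := H0 _; rewrite -/(wsP (toP L)).
  move=> /(_ _) H1.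
  suff : wsP (toP L) + ((-1)%:~R * c A + (1%:~R * c B + 0)) = 0.
    by move=> H2; apply/eqP; rewrite -subr_eq0; apply/eqP; rewrite -H2; ring.
  apply: H1 => v; rewrite fsP_cat fsP_toP -HLv Hg /=; ring.
rewrite -E; apply: le_trans (wsP_toP L) _.
by rewrite ler_pM2l // ler_nat.
Qed.

Fixpoint Apow z n := if n is n'.+1 then mK (Apow z n') (iK z) else eK.
Definition Zi (iz : nat) := if iz == 0%N then X else Y.

Fixpoint Cw (iz : nat) (sg : bool) (n : nat) : seq (nat * bool) :=
  if n is n'.+1 then nseq (2 ^ n')%N (iz.+2, sg) ++ (iz, true) :: Cw iz sg n' ++ [:: (iz, false)]
  else [::].

Lemma nth_Tg iz : (iz <= 1)%N -> nth (gone W) Tg iz = wK (Zi iz) /\ nth (gone W) Tg iz.+2 = uel (Zi iz).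
Proof. by case: iz => [|[|]]. Qed.

Lemma nseq_act iz sg k w2 : (iz <= 1)%N ->
  word_eval Tg (nseq k (iz.+2, sg) ++ w2) =
  (fun v => sgn sg * (k%:Z * (2 * ind (v = eK) - ind (v = iK (Zi iz)))) + (word_eval Tg w2).1 v,
   (word_eval Tg w2).2).
Proof.
move=> Hiz; case: (nth_Tg Hiz) => _ Hu.
elim: k => [|k IH].
  rewrite /=; case: (word_eval Tg w2) => f k /=; congr (_, _).
  by apply: functional_extensionality => v; rewrite mul0r mulr0 add0r.
rewrite [nseq _ _ ++ _]/= eval_cons IH gen_letterE Hu uel_val.
case: sg {IH} => /=; congr (_, _); try apply: functional_extensionality => v;
rewrite ?invK ?inv1 ?mulg1 ?mul1g //; rewrite -[k.+1]addn1 PoszD; ring.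
Qed.

Lemma Cw_act iz sg n w2 : (iz <= 1)%N ->
  word_eval Tg (Cw iz sg n ++ w2) =
  (fun v => sgn sg * (2 ^+ n * ind (v = eK) - ind (v = Apow (Zi iz) n)) + (word_eval Tg w2).1 v,
   (word_eval Tg w2).2).
Proof.
move=> Hiz; case: (nth_Tg Hiz) => Hm _.
elim: n w2 => [|n IH] w2.
  rewrite /=; case: (word_eval Tg w2) => f k /=; congr (_, _).
  by apply: functional_extensionality => v; rewrite expr0 mul1r subrr mulr0 add0r.
rewrite /= -catA nseq_act // cat_cons -catA eval_cons IH cat1s eval_cons !gen_letterE Hm /=.
congr (_, _); last by rewrite -mulA mulVg mul1g.
apply: functional_extensionality => v.
rewrite invK mulgKV oppr0 !add0r.
rewrite (ind_iff (eq_mul v (Zi iz) eK)) (ind_iff (eq_mul v (Zi iz) _)) mul1g.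
rewrite -natz natrX exprS; ring.
Qed.

Lemma Cw_valid iz sg n : (iz <= 1)%N -> word_valid Tg (Cw iz sg n).
Proof.
move=> Hiz; elim: n => [|n IH] //=.
rewrite /word_valid all_cat all_nseq /= ltnS; apply/andP; split.
  by apply/orP; right; move: Hiz; clear; case: iz => [|[|]].
move: IH; rewrite /word_valid /= all_cat => -> /=; rewrite andbT; move: Hiz; clear; case: iz => [|[|]] //.
Qed.

Definition Tword n := Cw 1 false n ++ Cw 0 true n.
Definition gg n : car W := (fun v => ind (v = Apow X n) - ind (v = Apow Y n), eK).
Lemma Tword_eval n : word_eval Tg (Tword n) = gg n.
Proof.
rewrite /Tword -[Cw 0 true n]cats0 Cw_act // Cw_act //=.
congr (_, _); apply: functional_extensionality => v; rewrite /sgn; ring.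
Qed.
Lemma Tword_valid n : word_valid Tg (Tword n).
Proof.
have H1 := @Cw_valid 1 false n isT; have H0 := @Cw_valid 0 true n isT.
by rewrite /word_valid in H1 H0 *; rewrite /Tword all_cat H1 H0.
Qed.

Variable S : seq (car W).
Hypothesis hS0 : nth (gone W) S 0 = a.
Hypothesis hS : (0 < size S)%N.

Section Moves.
Variable z : car K.
Variables Mi Mz : seq (nat * bool).
Variables kz ki : car K -> car K.
Hypothesis hMz : forall w2, word_eval S (Mz ++ w2) =
  (fun v => (word_eval S w2).1 (mK v (iK z)), kz (word_eval S w2).2).
Hypothesis hMi : forall w2, word_eval S (Mi ++ w2) =
  (fun v => (word_eval S w2).1 (mK v z), ki (word_eval S w2).2).
Hypothesis hk : forall k, ki (kz k) = k.
Hypothesis hMv : word_valid S Mi && word_valid S Mz.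

Fixpoint Dw sg n := if n is n'.+1 then Mi ++ Dw sg n' ++ Mz else [:: (0%N, sg)].

Lemma Dw_act sg n w2 : word_eval S (Dw sg n ++ w2) =
  (fun v => sgn sg * ind (v = Apow z n) + (word_eval S w2).1 v, (word_eval S w2).2).
Proof.
elim: n w2 => [|n IH] w2 /=.
  rewrite gen_letterE hS0; case: sg => /=; congr (_, _);
  try apply: functional_extensionality => v;
  rewrite ?ha1 ?ha2 ?invK ?inv1 ?mulg1 ?mul1g //; rewrite /sgn; ring.
rewrite -catA hMi -catA IH hMz /=; congr (_, _); last by rewrite hk.
apply: functional_extensionality => v; rewrite mulgKV; congr (_ * _ + _).
by apply: ind_iff; rewrite eq_mul.
Qed.

Lemma Dw_size sg n : size (Dw sg n) = (1 + n * (size Mi + size Mz))%N.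
Proof.
elim: n => [|n IH] //=; rewrite !size_cat IH mulSn; lia.
Qed.
Lemma Dw_valid sg n : word_valid S (Dw sg n).
Proof.
case/andP: hMv => H1 H2.
elim: n => [|n IH] /=; first by rewrite /word_valid /= hS.
by move: H1 H2 IH; rewrite /word_valid !all_cat => -> -> ->.
Qed.
End Moves.

Theorem gen_exp (MiX MzX MiY MzY : seq (nat * bool)) (kzX kiX kzY kiY : car K -> car K) :
  (forall w2, word_eval S (MzX ++ w2) =
     (fun v => (word_eval S w2).1 (mK v (iK X)), kzX (word_eval S w2).2)) ->
  (forall w2, word_eval S (MiX ++ w2) =
     (fun v => (word_eval S w2).1 (mK v X), kiX (word_eval S w2).2)) ->
  (forall k, kiX (kzX k) = k) -> word_valid S MiX && word_valid S MzX ->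
  (forall w2, word_eval S (MzY ++ w2) =
     (fun v => (word_eval S w2).1 (mK v (iK Y)), kzY (word_eval S w2).2)) ->
  (forall w2, word_eval S (MiY ++ w2) =
     (fun v => (word_eval S w2).1 (mK v Y), kiY (word_eval S w2).2)) ->
  (forall k, kiY (kzY k) = k) -> word_valid S MiY && word_valid S MzY ->
  (forall n, (2 ^ n)%:R <= `|c (Apow X n) - c (Apow Y n)| + 1 :> rat) ->
  exp_preceq_Dist S Tg.
Proof.
move=> hMzX hMiX hkX hvX hMzY hMiY hkY hvY hcn.
exists (size MiX + size MzX + size MiY + size MzY + 2)%N; split; first by rewrite addn2.
move=> n.
pose sw := Dw MiX MzX false n ++ Dw MiY MzY true n.
have Hsw : word_eval S sw = gg n.
  rewrite /sw -[Dw MiY MzY true n]cats0 (Dw_act hMzX hMiX hkX) (Dw_act hMzY hMiY hkY) /=.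
  congr (_, _); apply: functional_extensionality => v; rewrite /sgn; ring.
have Hvsw : word_valid S sw.
  have H1 := Dw_valid hvX false n; have H2 := Dw_valid hvY true n.
  by rewrite /word_valid in H1 H2 *; rewrite /sw all_cat H1 H2.
have [l [Hl Hls]] := wordlen_min Hvsw Hsw.
have [m [Hm _]] := wordlen_min (Tword_valid n) (Tword_eval n).
exists m; split.
  exists (gg n), l, m; split => //.
  apply: leq_trans Hls _; rewrite /sw size_cat !Dw_size; nia.
case: Hm => [[w [Hw1 Hw2 Hw3]] _].
have Hlb := @lower_bound w (Apow X n) (Apow Y n) Hw2 (fun v => f_equal (fun p => p.1 v) Hw3).
have H2 : (2 ^ n)%:R <= (2 * m + 1)%:R :> rat.
  apply: le_trans (hcn n) _; rewrite natrD natrM lerD2r -Hw1; exact: Hlb.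
rewrite ler_nat in H2; nia.
Qed.
End Gen.


Definition hF (w : seq letter) : int := foldr (fun l acc => (if l.2 then -1 else 1) + acc) 0 w.
Definition xinv : letter := (false, true).
Definition DF (w : seq letter) : bool := last (true, true) w == xinv.
Definition cF (v : car F2) : rat := if DF (sval v) then (2 : rat) ^ (- hF (sval v)) else 0.

Lemma hF_linv l : (if (linv l).2 then -1 else 1) = - (if l.2 then -1 else 1) :> int.
Proof. by case: l => [? []]. Qed.

Lemma sval_mulinv (z q : car F2) l : sval z = [:: linv l] ->
  sval (@gmul F2 (@ginv F2 z) q) = red_cons l (sval q).
Proof.
move=> Hz; rewrite /= Hz /= linvK; case: q => q Hq /=.
by rewrite freduce_id.
Qed.

Lemma two_pow_S (z : int) : (2 : rat) ^ (- (-1 + z)) = 2 * 2 ^ (- z).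
Proof. by rewrite opprD opprK expfzDr. Qed.

Lemma two_inv : 2 * 2 ^ (-1) = 1 :> rat.
Proof. by rewrite -(expfzDr 1 (-1)) // addrN expr0z. Qed.

Lemma hcF (l : letter) (q : car F2) : l.2 = true ->
  `|2 * cF q - cF (exist _ (red_cons l (sval q)) (red_cons_reduced l (svalP q)))| <= 2.
Proof.
case: q => q Hq /= Hl; rewrite /cF /=.
case: q Hq => [|m q] Hq.
  case: l Hl => l1 l2 /= ->; rewrite /DF /=.
  case: ifP => _; rewrite mulr0 sub0r normrN ?normr0 //.
rewrite /red_cons.
have [Hm|Hm] := eqVneq m (linv l).
  rewrite Hm {Hm}; case: q Hq => [|m' q] Hq.
    by rewrite /DF /= /xinv /linv Hl /= xpair_eqE andbF mulr0 subr0 normr0.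
  have -> : DF [:: linv l, m' & q] = DF (m' :: q) by [].
  have -> : hF [:: linv l, m' & q] = (if (linv l).2 then -1 else 1) + hF (m' :: q) by [].
  rewrite hF_linv Hl.
  case: ifP => _; last by rewrite mulr0 subrr normr0.
  rewrite opprD opprK expfzDr // mulrA.
  by rewrite two_inv mul1r subrr normr0.
have -> : DF [:: l, m & q] = DF (m :: q) by [].
have -> : hF [:: l, m & q] = (if l.2 then -1 else 1) + hF (m :: q) by [].
rewrite Hl two_pow_S; case: ifP => _; by rewrite ?mulr0 subrr normr0.
Qed.

Lemma cF_sval (u v : car F2) : sval u = sval v -> cF u = cF v.
Proof. by rewrite /cF => ->. Qed.

Lemma nseq_rcons (T : Type) n (x : T) : nseq n x ++ [:: x] = nseq n.+1 x.
Proof. by elim: n => //= n ->. Qed.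

Lemma reduced_nseq n l : l != linv l -> reduced (nseq n l).
Proof. by move=> H; elim: n => [|[|n] IH] //=; rewrite H. Qed.

Lemma ApowF (z : car F2) l n : sval z = [:: linv l] -> l != linv l ->
  sval (Apow z n) = nseq n l.
Proof.
move=> Hz Hl; elim: n => [|n IH] //=.
rewrite IH Hz /= linvK.
by rewrite nseq_rcons freduce_id //; exact: reduced_nseq.
Qed.

Lemma hF_nseq n l : hF (nseq n l) = n%:Z * (if l.2 then -1 else 1).
Proof.
elim: n => [|n IH]; first by rewrite mul0r.
by rewrite [nseq _ _]/= [hF _]/= -/(hF (nseq n l)) IH -[n.+1]addn1 PoszD; ring.
Qed.

Lemma last_nseq n (l d : letter) : last d (nseq n.+1 l) = l.
Proof. by elim: n => //. Qed.

Lemma G_part : exp_preceq_Dist G_gens H_gens.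
Proof.
have -> : H_gens = @Tg F2 Ga F2x F2y by rewrite /Tg /uel unlock.
have ha1 : forall v : car F2, Ga.1 v = ind (v = gone F2).
  move=> v; rewrite /Ga /wreath_a /=; case: decP => [H|H].
    by rewrite ind_T.
  by rewrite ind_F.
have hc : forall b q, `|2 * cF q - cF (@gmul F2 (@ginv F2 (@Zof F2 F2x F2y b)) q)| <= 2.
  move=> b q; case: b => /=.
    have -> : cF (@gmul F2 (@ginv F2 F2x) q) =
      cF (exist _ (red_cons (false, true) (sval q)) (red_cons_reduced _ (svalP q))).
      by apply: cF_sval; apply: (@sval_mulinv F2x q (false, true)).
    exact: hcF.
  have -> : cF (@gmul F2 (@ginv F2 F2y) q) =
    cF (exist _ (red_cons (true, true) (sval q)) (red_cons_reduced _ (svalP q))).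
    by apply: cF_sval; apply: (@sval_mulinv F2y q (true, true)).
  exact: hcF.
apply: (@gen_exp F2 F2_laws Ga ha1 erefl F2x F2y cF hc G_gens erefl isT
   [:: (1%N, true)] [:: (1%N, false)] [:: (2%N, true)] [:: (2%N, false)]
   (fun k => @gmul F2 F2x k) (fun k => @gmul F2 (@ginv F2 F2x) k)
   (fun k => @gmul F2 F2y k) (fun k => @gmul F2 (@ginv F2 F2y) k)).
- move=> w2 /=; congr (_, _); apply: functional_extensionality => v; by rewrite add0r.
- move=> w2 /=; congr (_, _); apply: functional_extensionality => v.
  by rewrite (invK F2_laws F2x : F2inv (F2inv F2x) = F2x) oppr0 add0r.
- by move=> k; rewrite -(mulA F2_laws) (mulVg F2_laws) (mul1g F2_laws).
- by [].
- move=> w2 /=; congr (_, _); apply: functional_extensionality => v; by rewrite add0r.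
- move=> w2 /=; congr (_, _); apply: functional_extensionality => v.
  by rewrite (invK F2_laws F2y : F2inv (F2inv F2y) = F2y) oppr0 add0r.
- by move=> k; rewrite -(mulA F2_laws) (mulVg F2_laws) (mul1g F2_laws).
- by [].
move=> n.
rewrite /cF (@ApowF _ (false, true)) // (@ApowF _ (true, true)) //.
case: n => [|n]; first by rewrite /= subrr normr0 add0r.
rewrite /DF !last_nseq /= hF_nseq /=.
have -> : - (-1 + n%:Z * -1) = (n.+1)%:Z by rewrite -[n.+1]addn1 PoszD; ring.
rewrite -exprnP subr0 ger0_norm; last by apply: exprn_ge0.
rewrite natrX; lra.
Qed.

Definition XZ : car ZwrZ := @gmul ZwrZ Kt Ks.
Definition cZ (q : car ZwrZ) : rat := (2 : rat) ^ (- q.2) * (q.1 (q.2 + 1))%:~R.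

Lemma hcZ b q : `|2 * cZ q - cZ (@gmul ZwrZ (@ginv ZwrZ (@Zof ZwrZ XZ Kt b)) q)| <= 2.
Proof.
case: q => f m; case: b; rewrite /cZ /=.
  set k1 := (X in if X == 0 then _ else _); have -> : k1 = m by rewrite /k1; ring.
  set k2 := (X in _ + f X); have -> : k2 = m + 1 by rewrite /k2; ring.
  set k3 := (X in 2 ^ X * (_ + _)%:~R); have -> : k3 = 1 + - m by rewrite /k3; ring.
  rewrite expfzDr // expr1z !intrD !intrN.
  have [->|Hm] := eqVneq m 0.
    rewrite ?eqxx /= oppr0 expr0z.
    set e := (X in `|X|); have -> : e = 2 by rewrite /e; ring.
    by rewrite ger0_norm.
  rewrite ?(negbTE Hm).
  set e := (X in `|X|); have -> : e = 0 by rewrite /e; ring.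
  by rewrite normr0.
set k2 := (X in - 0 + f X); have -> : k2 = m + 1 by rewrite /k2; ring.
set k3 := (X in 2 ^ X * (_ + _)%:~R); have -> : k3 = 1 + - m by rewrite /k3; ring.
rewrite expfzDr // expr1z oppr0 add0r.
set e := (X in `|X|); have -> : e = 0 by rewrite /e; ring.
by rewrite normr0.
Qed.

Lemma ApowKt n : (Apow Kt n).2 = - n%:Z /\ forall v, (Apow Kt n).1 v = 0.
Proof.
elim: n => [|n [H2 H1]] //=; split.
  by rewrite H2 -[n.+1]addn1 PoszD; ring.
by move=> v; rewrite H1 oppr0 addr0.
Qed.

Lemma ApowXZ n : [/\ (Apow XZ n).2 = - n%:Z,
  (forall v, v < 1 - n%:Z -> (Apow XZ n).1 v = 0) &
  ((0 < n)%N -> (Apow XZ n).1 (1 - n%:Z) = -1)].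
Proof.
elim: n => [|n [H2 H1 H3]] //=; split.
- by rewrite H2 -[n.+1]addn1 PoszD; ring.
- move=> v Hv; rewrite H1; last by move: Hv; rewrite -[n.+1]addn1 PoszD; lia.
  rewrite H2; case: ifP => [/eqP|] //; move: Hv; rewrite -[n.+1]addn1 PoszD; lia.
- move=> _; rewrite H1; last by rewrite -[n.+1]addn1 PoszD; lia.
  rewrite H2; case: ifP => [|/negP[]] //; apply/eqP; rewrite -[n.+1]addn1 PoszD; ring.
Qed.

Lemma G'x_eq : G'x = @wreath_K ZwrZ XZ.
Proof.
by rewrite /G'x /G't /G's /wreath_K /XZ /=; congr (_, _).
Qed.

Opaque ZwrZ.
Lemma G'_part : exp_preceq_Dist G'_gens H'_gens.
Proof.
have -> : H'_gens = @Tg ZwrZ G'a XZ Kt by rewrite /H'_gens G'x_eq /G'y /G't /Tg /uel unlock.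
have ha1 : forall v : car ZwrZ, G'a.1 v = ind (v = gone ZwrZ) by [].
have L := ZwrZ_laws.
apply: (@gen_exp ZwrZ ZwrZ_laws G'a ha1 erefl XZ Kt cZ hcZ G'_gens erefl isT
   [:: (2%N, true); (1%N, true)] [:: (1%N, false); (2%N, false)] [:: (2%N, true)] [:: (2%N, false)]
   (fun k => @gmul ZwrZ Ks (@gmul ZwrZ Kt k))
   (fun k => @gmul ZwrZ (@ginv ZwrZ Kt) (@gmul ZwrZ (@ginv ZwrZ Ks) k))
   (fun k => @gmul ZwrZ Kt k) (fun k => @gmul ZwrZ (@ginv ZwrZ Kt) k)).
- move=> w2 /=; congr (_, _); apply: functional_extensionality => v.
  by rewrite !add0r /XZ (invM L) (mulA L).
- move=> w2 /=; congr (_, _); apply: functional_extensionality => v.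
  by rewrite !oppr0 !add0r !(invK L) /XZ (mulA L).
- move=> k; rewrite -(mulA L (ginv Ks)) (mulVg L) (mul1g L).
  by rewrite -(mulA L) (mulVg L) (mul1g L).
- by [].
- move=> w2 /=; congr (_, _); apply: functional_extensionality => v; by rewrite add0r.
- move=> w2 /=; congr (_, _); apply: functional_extensionality => v.
  by rewrite (invK L) oppr0 add0r.
- by move=> k; rewrite -(mulA L) (mulVg L) (mul1g L).
- by [].
move=> n.
case: (ApowKt n) => _ HB.
case: (ApowXZ n) => HA2 _ HA3.
rewrite /cZ HB mulr0 subr0 HA2 opprK.
clear HB; case: n HA2 HA3 => [|n] HA2 HA3; first by [].
rewrite (_ : - n.+1%:Z + 1 = 1 - n.+1%:Z); last by ring.
rewrite HA3 // rmorphN1 mulrN1 normrN ger0_norm; last by apply: exprn_ge0.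
rewrite -exprnP natrX; lra.
Qed.

Transparent ZwrZ.

Theorem corollary3p2 :
  exp_preceq_Dist G_gens H_gens /\ exp_preceq_Dist G'_gens H'_gens.
Proof. exact: (conj G_part G'_part). Qed.
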